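(* Let $d\ge1$, let $T$ be a $d\times d$ column-stochastic matrix ($T_{ij}\ge0$, $\sum_i T_{ij}=1$ for all $j$), and let $\Phi$ be any quantum channel on $d\times d$ matrices whose classical action is $T$. For each row $i$ write $\sum_{j=1}^d T_{ij}=n_i+a_i$ with $n_i\in\mathbb{Z}_{\ge0}$ and $a_i\in[0,1)$, and define the vector $\mathbf{s}^{(i)}(T)\in\mathbb{R}^{d^2}$ whose first $n_i$ entries equal $1$, whose $(n_i+1)$-th entry equals $a_i$, and whose remaining entries are $0$. Let $\boldsymbol{\mu}^\succ(T)=\frac1d\sum_{i=1}^d\mathbf{s}^{(i)}(T)$. Then $\boldsymbol{\mu}^\succ(T)\succ\boldsymbol{\lambda}(J_\Phi)$.
   Context: Fix an orthonormal basis $\{|i\rangle\}_{i=1}^d$ of $\mathbb{C}^d$, $|\Omega\rangle=\sum_i|ii\rangle$. The Jamio{\l}kowski state of a channel $\Phi$ is $J_\Phi=\frac1d(\Phi\otimes\mathcal{I})(|\Omega\rangle\langle\Omega|)$. The classical action of $\Phi$ is the matrix $T$ with $T_{ij}=\langle i|\Phi(|j\rangle\langle j|)|i\rangle$. $\boldsymbol{\lambda}(X)$ denotes the eigenvalues of a Hermitian $X$ in non-increasing order. For real vectors $x,y$ of equal length $n$, $x\succ y$ means $\sum_{i=1}^k x_i^\downarrow\ge\sum_{i=1}^k y_i^\downarrow$ for all $k=1,\dots,n$, with $x^\downarrow$ the non-increasing rearrangement. *)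

(* Defs.v *)
From HB Require Import structures.
From mathcomp Require Import all_boot all_order all_algebra.
From mathcomp Require Import reals.
From mathcomp Require Import complex mxtens.
Set Implicit Arguments. Unset Strict Implicit. Unset Printing Implicit Defensive.
Import Order.TTheory GRing.Theory Num.Theory.
Local Open Scope ring_scope.
Local Open Scope sesquilinear_scope.

(* Positive semidefinite: <v, A v> >= 0 for every complex vector v
   (on R[i], "0 <= z" means z is real and nonnegative). *)
Definition psd (R : realType) n (A : 'M[R[i]]_n) : Prop :=
  forall v : 'cV[R[i]]_n, 0 <= (v ^t* *m A *m v) 0 0.

(* The ampliation (Phi (x) id_k) acting on 'M_(d*k), where the index
   p : 'I_(d*k) corresponds to the pair (i,a) = mxtens_unindex p,
   i the system index (acted on by Phi), a the ancilla index. *)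
Definition ampl (R : realType) d k (Phi : 'M[R[i]]_d -> 'M[R[i]]_d)
    (X : 'M[R[i]]_(d * k)) : 'M[R[i]]_(d * k) :=
  \matrix_(p, q)
    Phi (\matrix_(i, j) X (mxtens_index (i, (mxtens_unindex p).2))
                          (mxtens_index (j, (mxtens_unindex q).2)))
        (mxtens_unindex p).1 (mxtens_unindex q).1.

Definition is_channel (R : realType) d (Phi : {linear 'M[R[i]]_d -> 'M[R[i]]_d}) : Prop :=
  (forall X, \tr (Phi X) = \tr X) /\
  (forall k (X : 'M[R[i]]_(d * k)), psd X -> psd (ampl Phi X)).

Definition Omega (R : realType) d : 'cV[R[i]]_(d * d) :=
  \col_p ((mxtens_unindex p).1 == (mxtens_unindex p).2)%:R.

Definition jamiolkowski (R : realType) d (Phi : 'M[R[i]]_d -> 'M[R[i]]_d)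
    : 'M[R[i]]_(d * d) :=
  (d%:R)^-1 *: ampl Phi (Omega R d *m (Omega R d) ^t*).

Definition classical_action (R : realType) d (Phi : 'M[R[i]]_d -> 'M[R[i]]_d)
    (T : 'M[R]_d) : Prop :=
  forall i j, real_complex R (T i j) = Phi (delta_mx j j) i i.

Definition spectrum (R : realType) n (A : 'M[R[i]]_n) (s : seq R) : Prop :=
  char_poly A = \prod_(r <- s) ('X - (real_complex R r)%:P).

Definition sort_desc (R : realType) (s : seq R) : seq R :=
  sort (fun a b : R => b <= a) s.

Definition majorizes (R : realType) (x y : seq R) : Prop :=
  size x = size y /\
  forall k, (k <= size x)%N ->
    \sum_(v <- take k (sort_desc y)) v <= \sum_(v <- take k (sort_desc x)) v.

Definition rowsum (R : realType) d (T : 'M[R]_d) (i : 'I_d) : R :=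
  \sum_(j < d) T i j.

(* k-th entry (0-indexed) of s^(i)(T): 1 for k < n_i, a_i for k = n_i, else 0,
   where n_i = floor(rowsum) and a_i = rowsum - n_i. *)
Definition s_entry (R : realType) d (T : 'M[R]_d) (i : 'I_d) (k : nat) : R :=
  let r := rowsum T i in
  let n := Num.floor r in
  if (k%:Z < n)%R then 1 else if k%:Z == n then r - n%:~R else 0.

Definition mu_succ (R : realType) d (T : 'M[R]_d) : seq R :=
  mkseq (fun k => (d%:R)^-1 * \sum_(i < d) s_entry T i k) (d * d).

(* Main.v *)
Require Import Defs.
From HB Require Import structures.
From mathcomp Require Import all_boot all_order all_algebra.
From mathcomp Require Import reals.
From mathcomp Require Import complex mxtens.
From mathcomp Require Import ring zify lra.
Import Order.TTheory GRing.Theory Num.Theory.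
Local Open Scope ring_scope.
Local Open Scope sesquilinear_scope.
Set Implicit Arguments. Unset Strict Implicit. Unset Printing Implicit Defensive.
Section Comb.
Variable R : realType.

Definition sE (r : R) (k : nat) : R :=
  let n := Num.floor r in
  if (k%:Z < n)%R then 1 else if k%:Z == n then r - n%:~R else 0.

Lemma sE_ge0 r k : 0 <= sE r k.
Proof.
rewrite /sE; case: ifP => _ //; case: ifP => _ //.
by rewrite subr_ge0 floor_le.
Qed.

Lemma sE_le1 r k : sE r k <= 1.
Proof.
rewrite /sE; case: ifP => _ //; case: ifP => _ //.
have := floor_itv r; rewrite intrD => /andP[_ h].
lra.
Qed.

Lemma sE_mono r j j' : (j <= j')%N -> sE r j' <= sE r j.
Proof.
move=> jj.
case E1: (j%:Z < Num.floor r).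
  have -> : sE r j = 1 by rewrite /sE E1.
  exact: sE_le1.
case E2: (j%:Z == Num.floor r).
  have [<-|ne] := eqVneq j' j; first by [].
  have -> : sE r j' = 0.
    rewrite /sE; case: ifP => h; first by lia.
    by case: ifP => h'; first by lia.
  exact: sE_ge0.
have -> : sE r j' = 0.
  rewrite /sE; case: ifP => h; first by lia.
  by case: ifP => h'; first by lia.
exact: sE_ge0.
Qed.

Lemma sE_sum r k : 0 <= r ->
  \sum_(j < k) sE r j = if (k%:Z <= Num.floor r) then k%:R else r.
Proof.
move=> r0; elim: k => [|k IH].
  by rewrite big_ord0 floor_ge0 r0.
rewrite big_ord_recr /= IH.
case: ifP => h1; case: ifP => h2.
- rewrite /sE; have -> : (k%:Z < Num.floor r) = true by lia.
  by rewrite -natr1.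
- rewrite /sE; have -> : (k%:Z < Num.floor r) = false by lia.
  have hk : Num.floor r = k%:Z by lia.
  rewrite hk eqxx pmulrn; lra.
- by lia.
- rewrite /sE; have -> : (k%:Z < Num.floor r) = false by lia.
  have -> : (k%:Z == Num.floor r) = false by lia.
  by rewrite addr0.
Qed.

Lemma s_entryE d (T : 'M[R]_d) i k : s_entry T i k = sE (rowsum T i) k.
Proof. by []. Qed.

Lemma mu_take d (T : 'M[R]_d) k : (k <= d*d)%N ->
  \sum_(v <- take k (sort_desc (mu_succ T))) v =
  \sum_(j < k) (d%:R^-1 * \sum_(i < d) s_entry T i j).
Proof.
move=> kN; rewrite /sort_desc /mu_succ sorted_sort.
- rewrite /mkseq -map_take take_iota (minn_idPl kN) big_map.
  have -> : iota 0 k = index_iota 0 k by rewrite /index_iota subn0.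
  by rewrite big_mkord.
- by move=> y x z /= h1 h2; exact: le_trans h2 h1.
- rewrite /mkseq; apply: (homo_sorted (e:=ltn)); last exact: iota_ltn_sorted.
  move=> a b ab /=; rewrite ler_wpM2l ?invr_ge0 ?ler0n //.
  by apply: ler_sum => i _; rewrite !s_entryE; apply: sE_mono; apply: ltnW.
Qed.
End Comb.

Lemma perm_map_ex (T1 T2 : eqType) (f : T1 -> T2) (s : seq T2) (r : seq T1) :
  perm_eq s (map f r) -> exists r', perm_eq r' r /\ s = map f r'.
Proof.
elim: s r => [|x s IH] r.
  move=> /perm_size; rewrite size_map => /esym/size0nil ->.
  by exists [::].
move=> h.
have : x \in map f r by rewrite -(perm_mem h) mem_head.
move=> /mapP[y yr hx]; subst x.
have h2 : perm_eq (f y :: s) (f y :: map f (rem y r)).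
  apply: (perm_trans h).
  by rewrite -map_cons; apply: perm_map; apply: perm_to_rem.
rewrite perm_cons in h2.
have [r'' [hr'' ->]] := IH _ h2.
exists (y :: r''); split => //.
apply: (@perm_trans _ (y :: rem y r)); first by rewrite perm_cons.
by rewrite perm_sym; apply: perm_to_rem.
Qed.


Lemma char_poly_sim (F : comNzRingType) n (A Q Pm : 'M[F]_n) : Q *m Pm = 1%:M -> char_poly (Q *m A *m Pm) = char_poly A.
Proof.
move=> QP.
have e : char_poly_mx (Q *m A *m Pm) = map_mx polyC Q *m char_poly_mx A *m map_mx polyC Pm.
  rewrite /char_poly_mx mulmxBr mulmxBl !map_mxM; congr (_ - _).
  by rewrite scalar_mxC -mulmxA -map_mxM QP map_mx1 mulmx1.
rewrite /char_poly e !det_mulmx mulrC mulrA -det_mulmx -map_mxM.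
by rewrite (mulmx1C QP) map_mx1 det1 mul1r.
Qed.

Section S.
Variable R : realType.
Local Notation C := (R[i]).

Lemma delta_ent n (A : 'M[C]_n) (a b : 'I_n) :
  ((delta_mx 0 a : 'rV_n) *m A *m (delta_mx b 0 : 'cV_n)) = (A a b)%:M.
Proof. by apply/matrixP => i j; rewrite !ord1 -rowE -colE !mxE. Qed.

Lemma qf_delta n (A : 'M[C]_n) (a b : 'I_n) (x y : C) :
  (((x *: delta_mx a 0 + y *: delta_mx b 0 : 'cV_n)) ^t* *m A *m (x *: delta_mx a 0 + y *: delta_mx b 0 : 'cV_n)) 0 0
  = x^* * x * A a a + x^* * y * A a b + y^* * x * A b a + y^* * y * A b b.
Proof.
have -> : (x *: delta_mx a 0 + y *: delta_mx b 0 : 'cV_n) ^t* =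
   x^* *: delta_mx 0 a + y^* *: delta_mx 0 b.
  by apply/matrixP=> i j; rewrite !mxE ord1 eqxx /= rmorphD /= !rmorphM /= !conjC_nat !andbT.
rewrite /=. rewrite !mulmxDl. rewrite !mulmxDr. rewrite -!scalemxAl. rewrite -!scalemxAr. rewrite !delta_ent. rewrite !scale_scalar_mx. rewrite !mxE. rewrite !mulr1n.
by rewrite !mulrA !addrA.
Qed.

Lemma ge0_conj {z : C} : 0 <= z -> z^* = z.
Proof. by move=> /ger0_real /conj_Creal. Qed.

Lemma psd_herm n (A : 'M[C]_n) : psd A -> forall a b, A b a = (A a b)^*.
Proof.
move=> pA a b.
have q (x y : C) : (x^* * x * A a a + x^* * y * A a b + y^* * x * A b a + y^* * y * A b b)^*
   = x^* * x * A a a + x^* * y * A a b + y^* * x * A b a + y^* * y * A b b.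
  by rewrite -qf_delta; exact: ge0_conj (pA _).
have e1 := q 1 1. have e2 := q 1 'i. have e3 := q 1 0. have e4 := q 0 1.
move: e1 e2 e3 e4; rewrite !rmorphD !rmorphM /= !conjCK conjCi !rmorph1 !rmorph0 /=.
rewrite !(mul0r, mulr0, mul1r, mulr1, add0r, addr0) => e1 e2 e3 e4.
set u := A a b in e1 e2 *; set w := A b a in e1 e2 *.
set U := u^* in e1 e2 *; set W := w^* in e1 e2 *.
rewrite e3 e4 in e1 e2.
have ii : 'i * 'i = -1 :> C by rewrite -expr2 sqrCi.
have key : 2 * (U - w) = ((A a a + U + W + A b b) - (A a a + u + w + A b b))
   + 'i * ((A a a + - 'i * U + 'i * W + 'i * - 'i * A b b) - (A a a + 'i * u + - 'i * w + - 'i * 'i * A b b))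
   + (1 + 'i * 'i) * (U - W + u - w) by ring.
move: key; rewrite e1 e2 !subrr ii subrr !(mulr0, mul0r, addr0) => /eqP.
by rewrite mulf_eq0 pnatr_eq0 /= subr_eq0 => /eqP.
Qed.

Lemma mx11_mul m (X : 'M[C]_(1, m)) (Y : 'M[C]_(m, 1)) :
  (X *m Y) 0 0 = \sum_q X 0 q * Y q 0.
Proof. by rewrite mxE. Qed.

Lemma qfE n (A : 'M[C]_n) (v : 'cV[C]_n) :
  (v ^t* *m A *m v) 0 0 = \sum_p \sum_q (v p 0)^* * A p q * v q 0.
Proof.
rewrite mxE exchange_big /=; apply: eq_bigr => q _.
rewrite mxE mulr_suml; apply: eq_bigr => p _.
by rewrite !mxE.
Qed.

Lemma psd_rank1 n (v : 'cV[C]_n) : psd (v *m v ^t*).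
Proof.
move=> w; rewrite qfE.
under eq_bigr => p _ do under eq_bigr => q _ do rewrite !mxE big_ord1 !mxE.
have -> : \sum_p \sum_q (w p 0)^* * (v p 0 * (v q 0)^*) * w q 0 =
   (\sum_p (w p 0)^* * v p 0) * (\sum_p (w p 0)^* * v p 0)^*.
  rewrite rmorph_sum mulr_suml; apply: eq_bigr => p _.
  rewrite mulr_sumr; apply: eq_bigr => q _.
  by rewrite rmorphM /= conjCK; ring.
exact: mul_conjC_ge0.
Qed.

Lemma psd_scale n (A : 'M[C]_n) (c : C) : 0 <= c -> psd A -> psd (c *: A).
Proof.
move=> c0 pA v; rewrite -scalemxAr -scalemxAl mxE.
exact: mulr_ge0 (pA v).
Qed.

Lemma qf_diag n (A : 'M[C]_n) (a : 'I_n) :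
  ((delta_mx a 0 : 'cV_n) ^t* *m A *m (delta_mx a 0 : 'cV_n)) 0 0 = A a a.
Proof.
have := qf_delta A a a 1 0.
rewrite !scale1r !scale0r !addr0 !rmorph1 !rmorph0 => ->.
by rewrite !(mul0r, mulr0, mul1r, addr0).
Qed.

Lemma psd_diag n (A : 'M[C]_n) (a : 'I_n) : psd A -> 0 <= A a a.
Proof. by move=> pA; rewrite -qf_diag. Qed.

Lemma sum_tens m n (F : 'I_(m * n) -> C) :
  \sum_p F p = \sum_(a < m) \sum_(j < n) F (mxtens_index (a, j)).
Proof.
rewrite pair_big /=.
rewrite (reindex (@mxtens_index m n)) /=; last first.
  by exists (@mxtens_unindex m n) => x _; [rewrite mxtens_indexK | rewrite mxtens_unindexK].
by apply: eq_bigr => -[a j].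
Qed.

Lemma sum_delta_l n (i : 'I_n) (F : 'I_n -> C) : \sum_a (a == i)%:R * F a = F i.
Proof.
rewrite (bigD1 i) //= eqxx mul1r big1 ?addr0 // => a /negbTE ->.
by rewrite mul0r.
Qed.

Variables (d : nat) (Phi : {linear 'M[C]_d -> 'M[C]_d}).
Hypothesis tp : forall X, \tr (Phi X) = \tr X.
Hypothesis cp : forall k (X : 'M[C]_(d*k)), psd X -> psd (ampl Phi X).

Local Notation J := (jamiolkowski Phi).

Lemma PhiZ (c : C) (X : 'M[C]_d) : Phi (c *: X) = c *: Phi X.
Proof. exact: linearZ_LR. Qed.

Lemma PhiSum n (F : 'I_n -> 'M[C]_d) : Phi (\sum_i F i) = \sum_i Phi (F i).
Proof. exact: linear_sum. Qed.

Lemma pos_Phi (y : 'cV_d) i : 0 <= Phi (y *m y^t*) i i.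
Proof.
pose z : 'cV[C]_(d*1) := \col_p y (mxtens_unindex p).1 0.
have := cp (psd_rank1 z).
move=> /(psd_diag (mxtens_index (i, (0:'I_1)))).
rewrite /ampl mxE mxtens_indexK /=.
suff -> : \matrix_(i0, j) (z *m z^t*) (mxtens_index (i0, 0)) (mxtens_index (j, 0)) = y *m y^t* by [].
apply/matrixP => a b; rewrite !mxE !big_ord1 !mxE !mxtens_indexK.
by [].
Qed.

Lemma J_entry a j b l :
  J (mxtens_index (a, j)) (mxtens_index (b, l)) = d%:R^-1 * Phi (delta_mx j l) a b.
Proof.
rewrite /jamiolkowski /ampl !mxE !mxtens_indexK /=.
congr (_ * (Phi _ a b)); apply/matrixP => x y.
rewrite !mxE big_ord1 !mxE !mxtens_indexK /= conjC_nat.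
by rewrite -natrM mulnb.
Qed.

Lemma J_psd : psd J.
Proof.
apply: psd_scale; first by rewrite invr_ge0 ler0n.
exact/cp/psd_rank1.
Qed.

Definition blockv (i : 'I_d) (x : 'cV[C]_d) : 'cV_(d*d) :=
  \col_p (((mxtens_unindex p).1 == i)%:R * x (mxtens_unindex p).2 0).

Lemma qf_block (i : 'I_d) (x : 'cV[C]_d) :
  ((blockv i x)^t* *m J *m blockv i x) 0 0 <= d%:R^-1 * \sum_a (x a 0)^* * x a 0.
Proof.
rewrite qfE sum_tens.
under eq_bigr => a _ do under eq_bigr => j _ do rewrite sum_tens.
rewrite [X in X <= _](_ : _ = \sum_a (a==i)%:R * \sum_j \sum_b (b==i)%:R * \sum_l 
     (x j 0)^* * J (mxtens_index (a,j)) (mxtens_index (b,l)) * x l 0); last first.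
  apply: eq_bigr => a _; rewrite mulr_sumr; apply: eq_bigr => j _.
  rewrite mulr_sumr; apply: eq_bigr => b _.
  rewrite !mulr_sumr; apply: eq_bigr => l _.
  rewrite !mxE !mxtens_indexK /= rmorphM /= conjC_nat; ring.
rewrite sum_delta_l; under eq_bigr => j _ do rewrite sum_delta_l.
pose y := map_mx Num.conj x.
have E : \sum_j \sum_l (x j 0)^* * J (mxtens_index (i, j)) (mxtens_index (i, l)) * x l 0
    = d%:R^-1 * Phi (y *m y^t*) i i.
  rewrite [y *m y^t*]matrix_sum_delta PhiSum summxE mulr_sumr.
  apply: eq_bigr => j _; rewrite PhiSum summxE mulr_sumr.
  apply: eq_bigr => l _. rewrite J_entry PhiZ [in RHS]mxE !mxE big_ord1 !mxE conjCK.
  ring.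
rewrite E ler_wpM2l ?invr_ge0 ?ler0n //.
have -> : \sum_a (x a 0)^* * x a 0 = \tr (Phi (y *m y^t*)).
  rewrite tp /mxtrace; apply: eq_bigr => a _.
  by rewrite !mxE big_ord1 !mxE conjCK.
rewrite /mxtrace (bigD1 i) //= lerDl.
by apply: sumr_ge0 => a _; apply: pos_Phi.
Qed.

Lemma J_herm : J \is hermsymmx.
Proof.
rewrite is_hermitianmxE expr0 scale1r; apply/eqP/matrixP => p q.
by rewrite (psd_herm J_psd q p) !mxE.
Qed.

Local Notation P := (spectralmx J).
Local Notation D := (spectral_diag J).

Lemma J_decomp : J = P^t* *m diag_mx D *m P.
Proof.
have /orthomx_spectralP {1}-> := hermitian_normalmx J_herm.
by rewrite invmx_unitary // spectral_unitarymx.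
Qed.

Lemma PPt : P *m P^t* = 1%:M.
Proof. exact/unitarymxP/spectral_unitarymx. Qed.

Lemma qf_spec (v : 'cV_(d*d)) :
  (v^t* *m J *m v) 0 0 = \sum_m D 0 m * (((P *m v) m 0)^* * (P *m v) m 0).
Proof.
have -> : v^t* *m J *m v = (P *m v)^t* *m diag_mx D *m (P *m v).
  by rewrite [in LHS]J_decomp !mulmxA trmx_mul map_mxM.
rewrite mxE; apply: eq_bigr => m _.
rewrite mul_mx_diag !mxE; ring.
Qed.

Lemma J_entry_spec p q : J p q = \sum_m (P m p)^* * D 0 m * P m q.
Proof.
rewrite [in LHS]J_decomp mxE; apply: eq_bigr => m _.
by rewrite mul_mx_diag !mxE.
Qed.

Definition colv (m : 'I_(d*d)) : 'cV[C]_(d*d) := \col_q (P m q)^*.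

Lemma Pv_col m m' : (P *m colv m) m' 0 = (m' == m)%:R.
Proof.
have := congr1 (fun M : 'M_(d*d) => M m' m) PPt; rewrite !mxE => <-.
by apply: eq_bigr => q _; rewrite !mxE.
Qed.

Lemma D_ge0 m : 0 <= D 0 m.
Proof.
have := J_psd (colv m); rewrite qf_spec.
rewrite (bigD1 m) //= big1 ?addr0; last first.
  by move=> m' /negbTE hm; rewrite Pv_col hm rmorph0 !mul0r mulr0.
by rewrite Pv_col eqxx rmorph1 !mulr1.
Qed.

Definition tw (m : 'I_(d*d)) (i : 'I_d) : C :=
  \sum_j P m (mxtens_index (i, j)) * (P m (mxtens_index (i, j)))^*.

Lemma tw_ge0 m i : 0 <= tw m i.
Proof. by apply: sumr_ge0 => j _; rewrite mul_conjC_ge0. Qed.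

Lemma c_le m i : D 0 m * tw m i <= d%:R^-1.
Proof.
pose x : 'cV[C]_d := \col_j (P m (mxtens_index (i, j)))^*.
have hq := qf_block i x.
have ht : (P *m blockv i x) m 0 = tw m i.
  rewrite mxE sum_tens.
  rewrite (eq_bigr (fun a => (a == i)%:R * \sum_j P m (mxtens_index (a, j)) * (P m (mxtens_index (a, j)))^*)).
    by rewrite sum_delta_l.
  move=> a _; rewrite mulr_sumr; apply: eq_bigr => j _.
  by rewrite !mxE mxtens_indexK /=; case: eqP => [->|_]; rewrite ?mul0r ?mulr0 ?mul1r.
have hx : \sum_a (x a 0)^* * x a 0 = tw m i.
  by apply: eq_bigr => j _; rewrite !mxE conjCK.
rewrite hx qf_spec (bigD1 m) //= ht ge0_conj ?tw_ge0 // in hq.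
have h2 : D 0 m * tw m i * tw m i <= d%:R^-1 * tw m i.
  apply: le_trans hq; rewrite -mulrA lerDl.
  apply: sumr_ge0 => m' _; apply: mulr_ge0; first exact: D_ge0.
  by rewrite mulrC mul_conjC_ge0.
have [t0|tn0] := eqVneq (tw m i) 0.
  by rewrite t0 mulr0 invr_ge0 ler0n.
have tp0 : 0 < tw m i by rewrite lt0r tn0 tw_ge0.
by rewrite -(ler_pM2r tp0).
Qed.

Lemma sum_tw m : \sum_i tw m i = 1.
Proof.
have := congr1 (fun M : 'M_(d*d) => M m m) PPt; rewrite !mxE eqxx /= => h; apply: etrans h.
rewrite sum_tens; apply: eq_bigr => i _; apply: eq_bigr => j _.
by rewrite !mxE.
Qed.

Lemma sum_c i : \sum_m D 0 m * tw m i = \sum_j J (mxtens_index (i, j)) (mxtens_index (i, j)).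
Proof.
under [RHS]eq_bigr => j _ do rewrite J_entry_spec.
rewrite exchange_big /=; apply: eq_bigr => m _.
rewrite mulr_sumr; apply: eq_bigr => j _; ring.
Qed.

Variable T : 'M[R]_d.
Hypothesis T0 : forall i j, 0 <= T i j.
Hypothesis cl : classical_action Phi T.

Lemma sum_c_T i : \sum_m D 0 m * tw m i = d%:R^-1 * real_complex R (rowsum T i).
Proof.
rewrite sum_c; under eq_bigr => j _ do rewrite J_entry -cl.
by rewrite /rowsum rmorph_sum mulr_sumr.
Qed.

Lemma main_bound (t : seq 'I_(d*d)) k : uniq t -> (size t <= k)%N ->
  \sum_(m <- t) D 0 m <= \sum_i d%:R^-1 * real_complex R (\sum_(j < k) s_entry T i j).
Proof.
move=> ut st.
have -> : \sum_(m <- t) D 0 m = \sum_i \sum_(m <- t) D 0 m * tw m i.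
  rewrite exchange_big /=; apply: eq_bigr => m _.
  by rewrite -mulr_sumr sum_tw mulr1.
apply: ler_sum => i _.
have r0 : 0 <= rowsum T i by apply: sumr_ge0 => j _.
have -> : \sum_(j < k) s_entry T i j = \sum_(j < k) sE (rowsum T i) j by [].
rewrite sE_sum //; case: ifP => _.
  apply: (@le_trans _ _ (\sum_(m <- t) d%:R^-1)).
    by apply: ler_sum => m _; exact: c_le.
  rewrite big_uniq // sumr_const (card_uniqP _) //.
  rewrite rmorph_nat -[_ *+ size t]mulr_natr ler_wpM2l ?invr_ge0 ?ler0n //.
  by rewrite ler_nat.
rewrite -sum_c_T big_uniq // [X in _ <= X](bigID (mem t)) /= lerDl.
by apply: sumr_ge0 => m _; apply: mulr_ge0; [exact: D_ge0 | exact: tw_ge0].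
Qed.

Lemma spec_perm (lam : seq R) : spectrum J lam ->
  perm_eq lam [seq complex.Re (D 0 m) | m <- enum 'I_(d*d)].
Proof.
rewrite /spectrum => hs.
have hc : char_poly J = \prod_(m < d*d) ('X - (D 0 m)%:P).
  rewrite [in LHS]J_decomp char_poly_sim; last by apply: mulmx1C; exact: PPt.
  rewrite char_poly_trig ?diag_mx_is_trig //; apply: eq_bigr => m _.
  by rewrite mxE eqxx mulr1n.
have := @prod_XsubC_eq _ (map (real_complex R) lam) (map (D 0) (enum 'I_(d*d))).
rewrite !big_map -enumT big_enum /= -hc hs => /(_ erefl) hp.
have e : map (D 0) (enum 'I_(d*d)) = map (real_complex R) [seq complex.Re (D 0 m) | m <- enum 'I_(d*d)].
  rewrite -[in RHS]map_comp; apply: eq_map => m /=.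
  by rewrite RRe_real // ger0_real // D_ge0.
rewrite e in hp.
exact: (perm_map_inj (@complexI R) hp).
Qed.
End S.

Unset Implicit Arguments.

Theorem mainTheorem3 (R : realType) (d : nat) (T : 'M[R]_d)
    (Phi : {linear 'M[R[i]]_d -> 'M[R[i]]_d}) :
  (0 < d)%N ->
  (forall i j, 0 <= T i j) ->
  (forall j, \sum_(i < d) T i j = 1) ->
  is_channel Phi ->
  classical_action Phi T ->
  forall lam : seq R, spectrum (jamiolkowski Phi) lam ->
  majorizes (mu_succ T) lam.
Proof.
move=> d0 T0 _ [tp cp] cl lam hs.
have hp := spec_perm cp hs.
split.
  by rewrite size_mkseq (perm_size hp) size_map size_enum_ord.
move=> k; rewrite size_mkseq => kN.
rewrite mu_take //.
have hs' : perm_eq (sort_desc lam)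
    [seq complex.Re (spectral_diag (jamiolkowski Phi) 0 m) | m <- enum 'I_(d*d)].
  by rewrite /sort_desc perm_sort.
have [r' [hr' ->]] := perm_map_ex hs'.
rewrite -map_take big_map -lecR !rmorph_sum /=.
have ut : uniq (take k r') by apply: take_uniq; rewrite (perm_uniq hr') enum_uniq.
have st : (size (take k r') <= k)%N by rewrite size_take_min geq_minl.
have -> : \sum_(m <- take k r') real_complex R (complex.Re (spectral_diag (jamiolkowski Phi) 0 m))
   = \sum_(m <- take k r') spectral_diag (jamiolkowski Phi) 0 m.
  by apply: eq_bigr => m _; rewrite RRe_real // ger0_real // (D_ge0 cp).
apply: le_trans (main_bound tp cp T0 cl ut st) _.
rewrite le_eqVlt; apply/orP; left; apply/eqP.
under [RHS]eq_bigr => j _ do rewrite rmorphM fmorphV rmorph_nat rmorph_sum.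
rewrite -[RHS]mulr_sumr exchange_big [RHS]mulr_sumr; apply: eq_bigr => i _.
by rewrite rmorph_sum.
Qed.
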